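(* For all integers $t,n$: (i) the restriction $\phi_*:X_{t,n}\to Y_t$ is injective; (ii) there are bijections $\alpha:X_{t,n}\to X_{-t,n+6}$ and $\beta:Y_t\to Y_{-t}$ such that $\phi_*\circ\alpha=\beta\circ\phi_*$ on $X_{t,n}$; (iii) there is a bijection $\gamma:X_{t,n}\to X_{t,n+12}$ such that $\phi_*\circ\gamma=\phi_*$ on $X_{t,n}$; (iv) the restriction $\phi_*:\coprod_{j=0}^{11}X_{t,n+j}\to Y_t$ is a bijection.
   Context: $B_3=\langle\sigma_1,\sigma_2:\sigma_1\sigma_2\sigma_1=\sigma_2\sigma_1\sigma_2\rangle$. The homomorphism $\phi:B_3\to\mathrm{SL}_2(\mathbb{Z})$ is defined by $\phi(\sigma_1)=\begin{bmatrix}1&1\\0&1\end{bmatrix}$, $\phi(\sigma_2)=\begin{bmatrix}1&0\\-1&1\end{bmatrix}$; it is surjective and induces a map $\phi_*$ from the set of conjugacy classes of $B_3$ to the set of conjugacy classes of $\mathrm{SL}_2(\mathbb{Z})$. Let $\epsilon:B_3\to\mathbb{Z}$ be the exponent sum homomorphism ($\epsilon(\sigma_1)=\epsilon(\sigma_2)=1$), and define the trace of $g\in B_3$ as $\mathrm{tr}(\phi(g))$; both are class functions. $X_{t,n}$ is the set of conjugacy classes in $B_3$ of trace $t$ and exponent sum $n$, and $Y_t$ is the set of conjugacy classes in $\mathrm{SL}_2(\mathbb{Z})$ of trace $t$. *)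

(* Defs.v *)
From HB Require Import structures.
From mathcomp Require Import all_boot all_order all_algebra.
From mathcomp Require Import boolp classical_sets functions.
Set Implicit Arguments. Unset Strict Implicit. Unset Printing Implicit Defensive.
Import Order.TTheory GRing.Theory Num.Theory.
Local Open Scope ring_scope.
Local Open Scope classical_set_scope.

(* ---------- The braid group B_3 as the group presented by
   < s1, s2 | s1 s2 s1 = s2 s1 s2 > : words in the generators and their
   inverses, modulo the congruence generated by free cancellation and the
   braid relation. ---------- *)
Inductive gen := s1 | s2 | s1i | s2i.

Definition ginv (a : gen) : gen :=
  match a with s1 => s1i | s2 => s2i | s1i => s1 | s2i => s2 end.

Definition word := seq gen.

Definition winv (w : word) : word := rev (map ginv w).

Inductive beq : word -> word -> Prop :=
  | beq_refl w : beq w w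
  | beq_sym u v : beq u v -> beq v u
  | beq_trans u v w : beq u v -> beq v w -> beq u w
  | beq_cancel u v a : beq (u ++ [:: a; ginv a] ++ v) (u ++ v)
  | beq_braid u v : beq (u ++ [:: s1; s2; s1] ++ v) (u ++ [:: s2; s1; s2] ++ v).

Definition bconj (h g : word) : Prop := exists w : word, beq h (w ++ g ++ winv w).

Definition b3class (g : word) : set word := [set h | bconj h g].

Definition mx2 (a b c d : int) : 'M[int]_2 :=
  \matrix_(i < 2, j < 2)
    if (i == 0 :> nat) then (if (j == 0 :> nat) then a else b)
    else (if (j == 0 :> nat) then c else d).

Definition phigen (a : gen) : 'M[int]_2 :=
  match a with
  | s1 => mx2 1 1 0 1
  | s2 => mx2 1 0 (-1) 1
  | s1i => mx2 1 (-1) 0 1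
  | s2i => mx2 1 0 1 1
  end.

Definition phi (w : word) : 'M[int]_2 := foldr (fun a M => phigen a *m M) 1%:M w.

Definition gexp (a : gen) : int :=
  match a with s1 | s2 => 1 | s1i | s2i => -1 end.
Definition expsum (w : word) : int := \sum_(a <- w) gexp a.

Definition btrace (w : word) : int := \tr (phi w).

Definition sl2class (A : 'M[int]_2) : set 'M[int]_2 :=
  [set B | exists P : 'M[int]_2, \det P = 1 /\ B = P *m A *m invmx P].

Definition Xset (t n : int) : set (set word) :=
  [set C | exists g : word, C = b3class g /\ btrace g = t /\ expsum g = n].

Definition Yset (t : int) : set (set 'M[int]_2) :=
  [set D | exists A : 'M[int]_2, \det A = 1 /\ \tr A = t /\ D = sl2class A].

Definition phistar (C : set word) : set 'M[int]_2 :=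
  [set B | exists g, C g /\ sl2class (phi g) B].

(* disjoint union  coprod_{j=0}^{11} X_{t,n+j}  as a set of tagged classes *)
Definition Xcoprod12 (t n : int) : set ('I_12 * set word) :=
  [set p | Xset t (n + (nat_of_ord p.1)%:Z) p.2].

(* Main.v *)
Require Import Defs.
From HB Require Import structures.
From mathcomp Require Import all_boot all_order all_algebra.
From mathcomp Require Import boolp classical_sets functions.
From mathcomp Require Import zify ring lra.
Import Order.TTheory GRing.Theory Num.Theory.
Local Open Scope ring_scope.
Local Open Scope classical_set_scope.


Lemma mx2_eta (M : 'M[int]_2) : M = mx2 (M 0 0) (M 0 1) (M 1 0) (M 1 1).
Proof.
apply/matrixP => i j; rewrite !mxE.
by case: i => [[|[|//]] Hi]; case: j => [[|[|//]] Hj] /=;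
  congr (M _ _); apply: val_inj.
Qed.

Lemma mx2E a b c d (i j : 'I_2) : mx2 a b c d i j =
  if (i == 0 :> nat) then (if (j == 0 :> nat) then a else b)
    else (if (j == 0 :> nat) then c else d).
Proof. by rewrite mxE. Qed.

Lemma mx2_mul a b c d a' b' c' d' :
  mx2 a b c d *m mx2 a' b' c' d' =
  mx2 (a*a' + b*c') (a*b' + b*d') (c*a' + d*c') (c*b' + d*d').
Proof.
apply/matrixP => i j; rewrite !mxE !big_ord_recl big_ord0 !mxE /=.
by case: i => [[|[|//]] Hi]; case: j => [[|[|//]] Hj] /=; rewrite addr0.
Qed.

Lemma mx2_inj a b c d a' b' c' d' :
  mx2 a b c d = mx2 a' b' c' d' -> [/\ a = a', b = b', c = c' & d = d'].
Proof.
move=> H.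
have E := fun i j => congr1 (fun M : 'M[int]_2 => M i j) H.
have := E 0 0; have := E 0 1; have := E 1 0; have := E 1 1.
by rewrite !mxE /= => -> -> -> ->.
Qed.

Lemma mx2_det a b c d : \det (mx2 a b c d) = a * d - b * c.
Proof.
rewrite (expand_det_row _ 0) !big_ord_recl big_ord0 /cofactor !det_mx11 !mxE /=.
rewrite /bump /=. simpl. rewrite !expr0 !expr1. lia.
Qed.

Lemma mx2_tr a b c d : \tr (mx2 a b c d) = a + d.
Proof. by rewrite /mxtrace !big_ord_recl big_ord0 !mxE /= addr0. Qed.

Lemma mx2_scalar (s : int) : s%:M = mx2 s 0 0 s :> 'M[int]_2.
Proof.
apply/matrixP => i j; rewrite !mxE.
by case: i => [[|[|//]] Hi]; case: j => [[|[|//]] Hj].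
Qed.

Lemma mx2_opp a b c d : - mx2 a b c d = mx2 (-a) (-b) (-c) (-d).
Proof.
apply/matrixP => i j; rewrite !mxE.
by case: i => [[|[|//]] Hi]; case: j => [[|[|//]] Hj].
Qed.

Lemma mx2_inv a b c d : a * d - b * c = 1 ->
  invmx (mx2 a b c d) = mx2 d (-b) (-c) a.
Proof.
move=> H.
have U : mx2 a b c d \in unitmx by rewrite unitmxE mx2_det H unitr1.
have E : mx2 d (-b) (-c) a *m mx2 a b c d = 1%:M.
  by rewrite mx2_mul mx2_scalar; congr mx2; lia.
by rewrite -[LHS]mul1mx -E -mulmxA mulmxV // mulmx1.
Qed.


Arguments beq_trans {u v w}.
Arguments beq_sym {u v}.

Lemma beq_catl p {u v} : beq u v -> beq (p ++ u) (p ++ v).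
Proof.
elim=> {u v} [w|u v _ IH|u v w _ IH1 _ IH2|u v a|u v].
- exact: beq_refl.
- exact: beq_sym.
- exact: beq_trans IH1 IH2.
- by have := beq_cancel (p ++ u) v a; rewrite -!catA.
- by have := beq_braid (p ++ u) v; rewrite -!catA.
Qed.

Lemma beq_catr q {u v} : beq u v -> beq (u ++ q) (v ++ q).
Proof.
elim=> {u v} [w|u v _ IH|u v w _ IH1 _ IH2|u v a|u v].
- exact: beq_refl.
- exact: beq_sym.
- exact: beq_trans IH1 IH2.
- by have := beq_cancel u (v ++ q) a; rewrite -!catA.
- by have := beq_braid u (v ++ q); rewrite -!catA.
Qed.

Lemma beq_cat u v u' v' : beq u u' -> beq v v' -> beq (u ++ v) (u' ++ v').
Proof.
move=> H1 H2; apply: beq_trans (beq_catr _ H1) _; exact: beq_catl.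
Qed.

Lemma beq_cons a {u v} : beq u v -> beq (a :: u) (a :: v).
Proof. exact: (beq_catl [:: a]). Qed.

Lemma ginvK a : ginv (ginv a) = a. Proof. by case: a. Qed.

Lemma beq_cancel0 a v : beq ([:: a; ginv a] ++ v) v.
Proof. exact: (beq_cancel [::] v a). Qed.

Lemma winv_cons a w : winv (a :: w) = winv w ++ [:: ginv a].
Proof. by rewrite /winv /= rev_cons cats1. Qed.

Lemma winv_cat u v : winv (u ++ v) = winv v ++ winv u.
Proof. by rewrite /winv map_cat rev_cat. Qed.

Lemma winvK w : winv (winv w) = w.
Proof. by rewrite /winv map_rev revK -map_comp (eq_map ginvK) map_id. Qed.

Lemma winv_r w : beq (w ++ winv w) [::].
Proof.
elim: w => [|a w IH] /=; first exact: beq_refl.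
rewrite winv_cons catA.
apply: beq_trans (beq_catr _ (beq_cons a IH)) _ => /=.
exact: (beq_cancel [::] [::] a).
Qed.

Lemma winv_l w : beq (winv w ++ w) [::].
Proof. by have := winv_r (winv w); rewrite winvK. Qed.

Definition cancels (a b : gen) : bool :=
  match a, b with
  | s1, s1i | s1i, s1 | s2, s2i | s2i, s2 => true
  | _, _ => false end.

Lemma cancelsP a b : cancels a b -> b = ginv a.
Proof. by case: a; case: b. Qed.

Fixpoint fred (w : word) : word :=
  match w with
  | [::] => [::]
  | a :: w' => match fred w' with
               | b :: r => if cancels a b then r else a :: b :: r
               | [::] => [:: a] end
  end.

Lemma beq_fred w : beq w (fred w).
Proof.
elim: w => [|a w IH] /=; first exact: beq_refl.
apply: beq_trans (beq_cons a IH) _.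
case: (fred w) => [|b r]; first exact: beq_refl.
case: ifP => [/cancelsP ->|_]; last exact: beq_refl.
exact: beq_cancel0.
Qed.

Lemma beq_fredE u v : fred u = fred v -> beq u v.
Proof.
move=> E; apply: beq_trans (beq_fred u) _; rewrite E; apply: beq_sym; exact: beq_fred.
Qed.

Lemma beq_braid0 v : beq ([:: s1; s2; s1] ++ v) ([:: s2; s1; s2] ++ v).
Proof. exact: (beq_braid [::] v). Qed.

Lemma beq_braidi u v : beq (u ++ [:: s1i; s2i; s1i] ++ v) (u ++ [:: s2i; s1i; s2i] ++ v).
Proof.
apply: beq_catl.
apply: beq_catr.
apply: (@beq_trans _ ([:: s1i; s2i; s1i] ++ [:: s2; s1; s2] ++ [:: s2i; s1i; s2i])).
  exact: beq_fredE.
apply: (@beq_trans _ ([:: s1i; s2i; s1i] ++ [:: s1; s2; s1] ++ [:: s2i; s1i; s2i])).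
  apply: beq_sym; exact: beq_braid.
exact: beq_fredE.
Qed.

Definition xw : word := [:: s1; s2; s1].
Definition yw : word := [:: s1; s2].
Definition D2 : word := xw ++ xw.
Definition D2i : word := winv D2.
Arguments xw : simpl never.
Arguments yw : simpl never.
Arguments D2 : simpl never.
Arguments D2i : simpl never.

Lemma beq_yyy : beq (yw ++ yw ++ yw) D2.
Proof. apply: beq_sym; exact: (beq_braid [:: s1; s2; s1] [::]). Qed.

Lemma D2_comm_gen a : beq (a :: D2) (D2 ++ [:: a]).
Proof.
have H1 : beq ([:: s1] ++ xw) (xw ++ [:: s2]).
  exact: (beq_braid [:: s1] [::]).
have H2 : beq ([:: s2] ++ xw) (xw ++ [:: s1]).
  apply: beq_sym; exact: (beq_braid [::] [:: s1]).
have K : forall b c, beq ([:: b] ++ xw) (xw ++ [:: c]) ->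
    beq ([:: c] ++ xw) (xw ++ [:: b]) -> beq ([:: b] ++ D2) (D2 ++ [:: b]).
  move=> b c Hb Hc; rewrite /D2 catA.
  apply: beq_trans (beq_catr _ Hb) _; rewrite -!catA.
  apply: beq_catl; exact: Hc.
have P1 : beq ([:: s1] ++ D2) (D2 ++ [:: s1]) by exact: K H1 H2.
have P2 : beq ([:: s2] ++ D2) (D2 ++ [:: s2]) by exact: K H2 H1.
have I : forall b, beq ([:: b] ++ D2) (D2 ++ [:: b]) ->
    beq ([:: ginv b] ++ D2) (D2 ++ [:: ginv b]).
  move=> b Hb /=.
  have E1 : beq (ginv b :: D2 ++ [:: b; ginv b]) (ginv b :: D2).
    have := beq_catl (ginv b :: D2) (beq_cancel [::] [::] b); by rewrite /= ?cats0.
  have E2 : beq (ginv b :: (D2 ++ [:: b]) ++ [:: ginv b]) (ginv b :: (b :: D2) ++ [:: ginv b]).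
    apply: beq_cons; apply: beq_catr; apply: beq_sym; exact: Hb.
  have E3 : beq ([:: ginv b; b] ++ D2 ++ [:: ginv b]) (D2 ++ [:: ginv b]).
    by have := beq_cancel [::] (D2 ++ [:: ginv b]) (ginv b); rewrite ginvK.
  rewrite -!catA /= in E2.
  exact: beq_trans (beq_sym E1) (beq_trans E2 E3).
case: a; [exact: P1|exact: P2|exact: (I s1)|exact: (I s2)].
Qed.

Definition central (z : word) := forall w, beq (w ++ z) (z ++ w).

Lemma D2_central : central D2.
Proof.
elim=> [|a w IH]; first by rewrite cats0; exact: beq_refl.
apply: beq_trans (beq_cons a IH) _.
by have := beq_catr w (D2_comm_gen a); rewrite -catA /=.
Qed.

Lemma central_inv z : central z -> central (winv z).
Proof.
move=> Hz w.
have E1 := beq_catr (w ++ winv z) (winv_l z).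
have E2 := beq_catl (winv z) (beq_catr (winv z) (Hz w)).
have E3 := beq_catl (winv z ++ w) (winv_r z).
rewrite -!catA /= in E1 E2 E3; rewrite cats0 in E3.
exact: beq_trans (beq_sym E1) (beq_trans (beq_sym E2) E3).
Qed.

Lemma central_cat z1 z2 : central z1 -> central z2 -> central (z1 ++ z2).
Proof.
move=> H1 H2 w.
have E1 := beq_catr z2 (H1 w).
have E2 := beq_catl z1 (H2 w).
rewrite -!catA in E1 E2 *.
exact: beq_trans E1 E2.
Qed.

Lemma central_nil : central [::].
Proof. by move=> w; rewrite cats0; exact: beq_refl. Qed.

Lemma D2i_central : central D2i.
Proof. exact: central_inv D2_central. Qed.

Lemma central_flatten z n : central z -> central (flatten (nseq n z)).
Proof.
move=> Hz; elim: n => [|n IH] /=; first exact: central_nil.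
exact: central_cat.
Qed.

Definition powD (k : int) : word :=
  match k with
  | Posz n => flatten (nseq n D2)
  | Negz n => flatten (nseq n.+1 D2i)
  end.

Lemma powD_central k : central (powD k).
Proof.
case: k => n; rewrite /powD; apply: central_flatten; [exact: D2_central|exact: D2i_central].
Qed.

Lemma powD_neg0 : powD (Negz 0) = D2i. Proof. exact: cats0. Qed.
Lemma powD_negS m : powD (Negz m.+1) = D2i ++ powD (Negz m). Proof. by []. Qed.
Lemma powD_posS m : powD (Posz m.+1) = D2 ++ powD (Posz m). Proof. by []. Qed.
Lemma powD_0 : powD 0 = [::]. Proof. by []. Qed.

Lemma powD_succ k : beq (D2 ++ powD k) (powD (k + 1)).
Proof.
case: k => n.
  have -> : Posz n + 1 = Posz n.+1 by lia.
  exact: beq_refl.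
case: n => [|m].
  have -> : Negz 0 + 1 = Posz 0 by [].
  rewrite powD_neg0 powD_0; exact: winv_r.
have -> : Negz m.+1 + 1 = Negz m by rewrite !NegzE; lia.
rewrite powD_negS catA.
have := beq_catr (powD (Negz m)) (winv_r D2); by [].
Qed.

Lemma powD_pred k : beq (D2i ++ powD k) (powD (k - 1)).
Proof.
case: k => n.
  case: n => [|m].
    have -> : Posz 0 - 1 = Negz 0 by [].
    rewrite powD_neg0 powD_0 cats0; exact: beq_refl.
  have -> : Posz m.+1 - 1 = Posz m by lia.
  rewrite powD_posS catA.
  have := beq_catr (powD m) (winv_l D2); by [].
have -> : Negz n - 1 = Negz n.+1 by rewrite !NegzE; lia.
rewrite powD_negS; exact: beq_refl.
Qed.

Inductive sym := X | Y1 | Y2.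

Definition symw (s : sym) : word :=
  match s with X => xw | Y1 => yw | Y2 => yw ++ yw end.

Definition nfw (u : seq sym) : word := flatten (map symw u).

Definition wnf (p : int * seq sym) : word := powD p.1 ++ nfw p.2.

Definition actX (p : int * seq sym) : int * seq sym :=
  match p.2 with X :: u => (p.1 + 1, u) | u => (p.1, X :: u) end.
Definition actY (p : int * seq sym) : int * seq sym :=
  match p.2 with
  | Y1 :: u => (p.1, Y2 :: u)
  | Y2 :: u => (p.1 + 1, u)
  | u => (p.1, Y1 :: u) end.
Definition shm (p : int * seq sym) : int * seq sym := (p.1 - 1, p.2).

Definition actg (a : gen) : int * seq sym -> int * seq sym :=
  match a with
  | s1 => fun p => actY (actY (shm (actX p)))
  | s2 => fun p => shm (actX (actY (actY p)))
  | s1i => fun p => shm (actX (actY p))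
  | s2i => fun p => shm (actY (actX p))
  end.

Definition nf (w : word) : int * seq sym := foldr actg (0, [::]) w.

Lemma comm_pre z v W : central z -> beq (v ++ z ++ W) (z ++ v ++ W).
Proof. by move=> Hz; have := beq_catr W (Hz v); rewrite -!catA. Qed.

Lemma nfw_cons s u : nfw (s :: u) = symw s ++ nfw u. Proof. by []. Qed.
Lemma nfw_nil : nfw [::] = [::]. Proof. by []. Qed.

Lemma wnf_actX p : beq (xw ++ wnf p) (wnf (actX p)).
Proof.
case: p => k u; rewrite /wnf /actX.
case: u => [|[] u]; rewrite /fst /snd; try exact: (comm_pre _ _ _ (powD_central k)).
rewrite nfw_cons [symw X]/=.
have E1 := comm_pre (powD k) xw (xw ++ nfw u) (powD_central k).
have E2 := beq_catr (nfw u) (beq_sym (powD_central k D2)).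
have E3 := beq_catr (nfw u) (powD_succ k).
rewrite /D2 -!catA in E2 E3.
exact: beq_trans E1 (beq_trans E2 E3).
Qed.

Lemma wnf_actY p : beq (yw ++ wnf p) (wnf (actY p)).
Proof.
case: p => k u; rewrite /wnf /actY.
case: u => [|[] u]; rewrite /fst /snd; try exact: (comm_pre _ _ _ (powD_central k)).
rewrite nfw_cons [symw Y2]/=.
have E1 := comm_pre (powD k) yw ((yw ++ yw) ++ nfw u) (powD_central k).
have E0 := beq_catr (nfw u) (beq_catl (powD k) beq_yyy).
have E2 := beq_catr (nfw u) (beq_sym (powD_central k D2)).
have E3 := beq_catr (nfw u) (powD_succ k).
rewrite -!catA in E0 E1 E2 E3.
exact: beq_trans E1 (beq_trans E0 (beq_trans E2 E3)).
Qed.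

Lemma wnf_shm p : beq (D2i ++ wnf p) (wnf (shm p)).
Proof.
case: p => k u; rewrite /wnf /shm /fst /snd catA; apply: beq_catr; exact: powD_pred.
Qed.

Lemma G1 : beq [:: s1] (yw ++ yw ++ D2i ++ xw).
Proof.
apply: beq_sym.
apply: (@beq_trans _ [:: s1; s2; s1; s2; s1i; s2i; s1i]).
  apply: beq_fredE; reflexivity.
apply: beq_trans (beq_braidi [:: s1; s2; s1; s2] [::]) _.
apply: beq_fredE; reflexivity.
Qed.

Lemma G2 : beq [:: s2] (D2i ++ xw ++ yw ++ yw).
Proof. apply: beq_fredE; reflexivity. Qed.

Lemma G3 : beq [:: s1i] (D2i ++ xw ++ yw).
Proof. apply: beq_fredE; reflexivity. Qed.

Lemma G4 : beq [:: s2i] (D2i ++ yw ++ xw).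
Proof.
apply: beq_sym.
apply: (@beq_trans _ [:: s1i; s2i; s1i; s2; s1]).
  apply: beq_fredE; reflexivity.
apply: beq_trans (beq_braidi [::] [:: s2; s1]) _.
apply: beq_fredE; reflexivity.
Qed.

Lemma wnf_gen a p : beq (a :: wnf p) (wnf (actg a p)).
Proof.
case: a.
- have E := beq_catr (wnf p) G1; rewrite -!catA in E.
  apply: beq_trans E _.
  apply: beq_trans (beq_catl (yw ++ yw ++ D2i) (wnf_actX p)) _; rewrite -!catA.
  apply: beq_trans (beq_catl (yw ++ yw) (wnf_shm _)) _; rewrite -!catA.
  apply: beq_trans (beq_catl yw (wnf_actY _)) _.
  exact: wnf_actY.
- have E := beq_catr (wnf p) G2; rewrite -!catA in E.
  apply: beq_trans E _.
  apply: beq_trans (beq_catl (D2i ++ xw ++ yw) (wnf_actY p)) _; rewrite -!catA.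
  apply: beq_trans (beq_catl (D2i ++ xw) (wnf_actY _)) _; rewrite -!catA.
  apply: beq_trans (beq_catl D2i (wnf_actX _)) _.
  exact: wnf_shm.
- have E := beq_catr (wnf p) G3; rewrite -!catA in E.
  apply: beq_trans E _.
  apply: beq_trans (beq_catl (D2i ++ xw) (wnf_actY p)) _; rewrite -!catA.
  apply: beq_trans (beq_catl D2i (wnf_actX _)) _.
  exact: wnf_shm.
- have E := beq_catr (wnf p) G4; rewrite -!catA in E.
  apply: beq_trans E _.
  apply: beq_trans (beq_catl (D2i ++ yw) (wnf_actX p)) _; rewrite -!catA.
  apply: beq_trans (beq_catl D2i (wnf_actY _)) _.
  exact: wnf_shm.
Qed.

Lemma nf_ok w : beq w (wnf (nf w)).
Proof.
elim: w => [|a w IH]; first exact: beq_refl.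
apply: beq_trans (beq_cons a IH) _; exact: wnf_gen.
Qed.

Definition isX (s : sym) := if s is X then true else false.

Fixpoint reduced (u : seq sym) : bool :=
  match u with
  | a :: ((b :: _) as t) => (isX a != isX b) && reduced t
  | _ => true
  end.

Lemma reduced_tail {a u} : reduced (a :: u) -> reduced u.
Proof. by case: u => // b u /andP[]. Qed.

Lemma actX_red p : reduced p.2 -> reduced (actX p).2.
Proof.
case: p => k [|[] u] //= H; try exact: reduced_tail H.
all: by case: u H => [|[] u] //=.
Qed.

Lemma actY_red p : reduced p.2 -> reduced (actY p).2.
Proof.
case: p => k [|[] u] //= H; try exact: reduced_tail H.
all: by case: u H => [|[] u] //=.
Qed.

Lemma nf_red w : reduced (nf w).2.
Proof.
elim: w => [|a w IH] //=.
case: a => /=; rewrite /shm /=;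
  repeat (apply: actX_red || apply: actY_red); rewrite /shm /=;
  repeat (apply: actX_red || apply: actY_red); exact: IH.
Qed.


Lemma left_inv (A B : 'M[int]_2) : B *m A = 1%:M -> invmx A = B.
Proof.
move=> H; have [UB UA] := mulmx1_unit H.
by rewrite -[LHS]mul1mx -H -mulmxA mulmxV // mulmx1.
Qed.

Lemma phi_cons a w : phi (a :: w) = phigen a *m phi w. Proof. by []. Qed.
Lemma phi_nil : phi [::] = 1%:M. Proof. by []. Qed.

Lemma phi_cat u v : phi (u ++ v) = phi u *m phi v.
Proof.
elim: u => [|a u IH]; first by rewrite phi_nil mul1mx.
by rewrite cat_cons !phi_cons IH mulmxA.
Qed.

Lemma phigen_det a : \det (phigen a) = 1.
Proof. by case: a; rewrite /= mx2_det. Qed.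

Lemma phi_det w : \det (phi w) = 1.
Proof.
elim: w => [|a w IH]; first by rewrite phi_nil det1.
by rewrite phi_cons det_mulmx IH phigen_det mulr1.
Qed.

Lemma phigen_inv a : phigen (ginv a) *m phigen a = 1%:M.
Proof. by case: a; rewrite /= mx2_mul mx2_scalar; congr mx2; lia. Qed.

Lemma phigen_inv' a : phigen a *m phigen (ginv a) = 1%:M.
Proof. by have := phigen_inv (ginv a); rewrite ginvK. Qed.

Lemma phi_winvl w : phi (winv w) *m phi w = 1%:M.
Proof.
elim: w => [|a w IH]; first by rewrite /winv /= mul1mx.
rewrite winv_cons phi_cat phi_cons -mulmxA (mulmxA (phi [:: ginv a])).
by rewrite phi_cons phi_nil mulmx1 phigen_inv mul1mx IH.
Qed.

Lemma phi_winv w : phi (winv w) = invmx (phi w).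
Proof. by apply/esym/left_inv; exact: phi_winvl. Qed.

Lemma phi_beq {u v} : beq u v -> phi u = phi v.
Proof.
elim=> {u v} [w|u v _ IH|u v w _ IH1 _ IH2|u v a|u v].
- by [].
- by [].
- by rewrite IH1.
- by rewrite !phi_cat phi_cons phi_cons phi_nil mulmx1 mulmxA phigen_inv' mulmx1.
- rewrite !phi_cat; congr (_ *m (_ *m _)).
  by rewrite /phi /= mx2_scalar !mx2_mul; congr mx2; lia.
Qed.

Lemma expsum_cons a w : expsum (a :: w) = gexp a + expsum w.
Proof. by rewrite /expsum big_cons. Qed.
Lemma expsum_nil : expsum [::] = 0.
Proof. by rewrite /expsum big_nil. Qed.
Lemma expsum_cat u v : expsum (u ++ v) = expsum u + expsum v.
Proof. by rewrite /expsum big_cat. Qed.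

Lemma expsum_winv w : expsum (winv w) = - expsum w.
Proof.
elim: w => [|a w IH]; first by rewrite /winv /= expsum_nil oppr0.
rewrite winv_cons expsum_cat IH expsum_cons expsum_cons expsum_nil.
by case: a => /=; lia.
Qed.

Lemma expsum_beq {u v} : beq u v -> expsum u = expsum v.
Proof.
elim=> {u v} [w|u v _ IH|u v w _ IH1 _ IH2|u v a|u v].
- by [].
- by [].
- by rewrite IH1.
- by rewrite !expsum_cat !expsum_cons expsum_nil; case: a => /=; lia.
- by rewrite !expsum_cat !expsum_cons expsum_nil /=; lia.
Qed.

Definition sgnm (b : bool) : 'M[int]_2 :=
  if b then mx2 (-1) 0 0 (-1) else mx2 1 0 0 1.

Lemma phi_D2 : phi D2 = mx2 (-1) 0 0 (-1).
Proof. by rewrite /D2 /xw /phi /= mx2_scalar !mx2_mul; congr mx2; lia. Qed.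

Lemma phi_D2i : phi D2i = mx2 (-1) 0 0 (-1).
Proof. by rewrite /D2i phi_winv phi_D2 mx2_inv //; congr mx2; lia. Qed.

Lemma sgnm_mul b c : sgnm b *m sgnm c = sgnm (b (+) c).
Proof. by case: b; case: c; rewrite /sgnm /= mx2_mul; congr mx2; lia. Qed.

Lemma phi_powD k : phi (powD k) = sgnm (odd `|k|%N).
Proof.
case: k => n.
  elim: n => [|n IH]; first by rewrite powD_0 phi_nil mx2_scalar.
  rewrite powD_posS phi_cat IH phi_D2 -[mx2 (-1) 0 0 (-1)]/(sgnm true).
  by rewrite sgnm_mul.
elim: n => [|n IH]; first by rewrite powD_neg0 phi_D2i.
rewrite powD_negS phi_cat IH phi_D2i -[mx2 (-1) 0 0 (-1)]/(sgnm true).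
by rewrite sgnm_mul.
Qed.

Lemma expsum_D2 : expsum D2 = 6.
Proof. by rewrite /D2 /xw /expsum !big_cons big_nil. Qed.
Lemma expsum_D2i : expsum D2i = -6.
Proof. by rewrite /D2i expsum_winv expsum_D2. Qed.

Lemma expsum_powD k : expsum (powD k) = 6 * k.
Proof.
case: k => n.
  elim: n => [|n IH]; first by rewrite powD_0 expsum_nil.
  by rewrite powD_posS expsum_cat IH expsum_D2; lia.
elim: n => [|n IH]; first by rewrite powD_neg0 expsum_D2i NegzE.
by rewrite powD_negS expsum_cat IH expsum_D2i !NegzE; lia.
Qed.


Definition mX : 'M[int]_2 := mx2 0 1 (-1) 0.
Definition mY1 : 'M[int]_2 := mx2 0 1 (-1) 1.
Definition mY2 : 'M[int]_2 := mx2 (-1) 1 (-1) 0.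
Definition msym (s : sym) := match s with X => mX | Y1 => mY1 | Y2 => mY2 end.

Lemma phi_symw s : phi (symw s) = msym s.
Proof.
by case: s; rewrite /symw /xw /yw /phi /= mx2_scalar !mx2_mul; congr mx2; lia.
Qed.

Lemma phi_nfw_cons s u : phi (nfw (s :: u)) = msym s *m phi (nfw u).
Proof. by rewrite nfw_cons phi_cat phi_symw. Qed.

Definition headX (u : seq sym) := if u is s :: _ then isX s else true.

Lemma lemA n v : (size v <= n)%N -> reduced v -> headX v ->
  exists (s a b c d : int) (f : bool),
  [/\ s = 1 \/ s = -1, 1 <= a, 1 <= d, b <= 0 & c <= 0] /\
  (v <> [::] -> f || (b + c <= -1)) /\
  phi (nfw v) = mx2 (s*a) (s*b) (s*c) (s*d) *m (if f then mX else 1%:M).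
Proof.
elim: n v => [|n IH] [|t v] //.
- move=> _ _ _; exists 1, 1, 0, 0, 1, false; split; first by split; lia.
  split=> //=; rewrite mulmx1 mx2_scalar; congr mx2; lia.
- move=> _ _ _; exists 1, 1, 0, 0, 1, false; split; first by split; lia.
  split=> //=; rewrite mulmx1 mx2_scalar; congr mx2; lia.
case: t => // Hs Hr _.
case: v Hs Hr => [|t v] Hs Hr.
  exists 1, 1, 0, 0, 1, true; split; first by split; lia.
  split=> //; rewrite phi_nfw_cons nfw_nil phi_nil !mx2_scalar !mx2_mul; congr mx2; lia.
case: t Hs Hr => // Hs Hr; have Hr1 := reduced_tail Hr.
- have Hr' := reduced_tail Hr1.
  have Hh : headX v by case: v Hr1 {Hs Hr Hr'} => [|[] v] //=.
  have [s [a [b [c [d [f [[Hs1 Ha Hd Hb Hc] [_ E]]]]]]]] := IH v (ltnW Hs) Hr' Hh.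
  exists (-s), (a - c), (b - d), c, d, f; split; first by split; lia.
  split; first by move=> _; apply/orP; right; lia.
  rewrite !phi_nfw_cons E !mulmxA; congr (_ *m _).
  rewrite /msym /mX /mY1 !mx2_mul; congr mx2; ring.
- have Hr' := reduced_tail Hr1.
  have Hh : headX v by case: v Hr1 {Hs Hr Hr'} => [|[] v] //=.
  have [s [a [b [c [d [f [[Hs1 Ha Hd Hb Hc] [_ E]]]]]]]] := IH v (ltnW Hs) Hr' Hh.
  exists (-s), a, b, (c - a), (d - b), f; split; first by split; lia.
  split; first by move=> _; apply/orP; right; lia.
  rewrite !phi_nfw_cons E !mulmxA; congr (_ *m _).
  rewrite /msym /mX /mY2 !mx2_mul; congr mx2; ring.
Qed.

Lemma pingpong u (z : int) : reduced u -> (z = 1 \/ z = -1) ->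
  phi (nfw u) = mx2 z 0 0 z -> u = [::].
Proof.
case: u => [|t v] // Hr Hz E; exfalso.
have Hne : t :: v <> [::] by [].
case: t Hr E Hne => Hr E Hne.
- have [s [a [b [c [d [f [[Hs Ha Hd Hb Hc] [Hf E']]]]]]]] := lemA _ _ (leqnn _) Hr isT.
  move: (Hf Hne); rewrite E' in E; clear Hf E'.
  case: f E => E Hf'; move: E; rewrite ?mulmx1 /mX ?mx2_mul => /mx2_inj [E1 E2 E3 E4];
    case: Hs E1 E2 E3 E4 => ->; case: Hz => -> E1 E2 E3 E4; lia.
- have Hr' := reduced_tail Hr.
  have Hh : headX v by case: v Hr {Hne Hr' E} => [|[] v] //=.
  have [s [a [b [c [d [f [[Hs Ha Hd Hb Hc] [Hf E']]]]]]]] := lemA _ _ (leqnn _) Hr' Hh.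
  rewrite phi_nfw_cons E' in E; clear E'.
  case: f E {Hf} => E; move: E; rewrite ?mulmx1 /mX /msym /mY1 ?mx2_mul => /mx2_inj [E1 E2 E3 E4];
    case: Hs E1 E2 E3 E4 => ->; case: Hz => -> E1 E2 E3 E4; lia.
- have Hr' := reduced_tail Hr.
  have Hh : headX v by case: v Hr {Hne Hr' E} => [|[] v] //=.
  have [s [a [b [c [d [f [[Hs Ha Hd Hb Hc] [Hf E']]]]]]]] := lemA _ _ (leqnn _) Hr' Hh.
  rewrite phi_nfw_cons E' in E; clear E'.
  case: f E {Hf} => E; move: E; rewrite ?mulmx1 /mX /msym /mY2 ?mx2_mul => /mx2_inj [E1 E2 E3 E4];
    case: Hs E1 E2 E3 E4 => ->; case: Hz => -> E1 E2 E3 E4; lia.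
Qed.

Lemma sgnm_sq b : sgnm b *m sgnm b = 1%:M.
Proof. by rewrite sgnm_mul addbb /sgnm mx2_scalar. Qed.

Lemma even_int (k : int) : odd `|k|%N = false -> exists m : int, k = 2 * m.
Proof.
case: k => n Hn.
  move: Hn => /= Hn.
  exists (Posz n./2); have := odd_double_half n; rewrite Hn add0n -muln2 => H.
  lia.
have Hn' : odd n.+1 = false by exact: Hn.
exists (- Posz (n.+1)./2); have := odd_double_half n.+1; rewrite Hn' add0n -muln2 => H.
rewrite NegzE; lia.
Qed.

Lemma kernel w : phi w = 1%:M -> exists m : int, expsum w = 12 * m /\ (m = 0 -> beq w [::]).
Proof.
move=> H.
have E := nf_ok w; have R := nf_red w.
case: (nf w) E R => k u E R.
have Hp := phi_beq E; rewrite H /wnf phi_cat phi_powD /= in Hp.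
have Hu : phi (nfw u) = sgnm (odd `|k|%N).
  by rewrite -[phi (nfw u)]mul1mx -(sgnm_sq (odd `|k|%N)) -mulmxA -Hp mulmx1.
have u0 : u = [::].
  apply: (@pingpong u (if odd `|k|%N then -1 else 1)) => //.
    by case: (odd _); [right|left].
  by rewrite Hu /sgnm; case: (odd _).
subst u.
have Hb : odd `|k|%N = false.
  move: Hu; rewrite /sgnm; case: (odd _) => //.
  by rewrite /nfw /= mx2_scalar => /mx2_inj [] ; lia.
have [m Hm] := even_int k Hb.
exists m; split.
  by rewrite (expsum_beq E) /wnf expsum_cat expsum_powD /nfw /= expsum_nil Hm; lia.
move=> m0; move: E; rewrite Hm m0 mulr0 /wnf powD_0 /nfw /=; exact.
Qed.


Definition reach (M : 'M[int]_2) := exists w, phi w = M.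

Lemma reach_gen a M : reach M -> reach (phigen a *m M).
Proof. by case=> w <-; exists (a :: w). Qed.

Lemma reach_back a M : reach (phigen a *m M) -> reach M.
Proof.
case=> w E; exists (ginv a :: w); by rewrite phi_cons E mulmxA phigen_inv mul1mx.
Qed.

Lemma reach_T (b : int) : reach (mx2 1 b 0 1).
Proof.
case: b => n.
  elim: n => [|n [w E]]; first by exists [::]; rewrite phi_nil mx2_scalar.
  exists (s1 :: w); rewrite phi_cons E /= mx2_mul; congr mx2; lia.
elim: n => [|n [w E]].
  by exists [:: s1i]; rewrite phi_cons phi_nil mulmx1 /= NegzE.
exists (s1i :: w); rewrite phi_cons E /= mx2_mul !NegzE; congr mx2; lia.
Qed.

Lemma reach_ut a b d : a * d = 1 -> reach (mx2 a b 0 d).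
Proof.
move=> H.
have Ha : `|a|%N = 1%N.
  have := congr1 absz H; rewrite abszM => /eqP; rewrite muln_eq1 => /andP[/eqP -> _].
  by [].
have [[-> ->]|[-> ->]] : (a = 1 /\ d = 1) \/ (a = -1 /\ d = -1).
  have [Ea|Ea] : a = 1 \/ a = -1 by lia.
    by rewrite Ea in H; left; lia.
  by rewrite Ea in H; right; lia.
  exact: reach_T.
have [w E] := reach_T (- b).
exists (D2 ++ w); rewrite phi_cat phi_D2 E mx2_mul; congr mx2; lia.
Qed.

Lemma reach_all N a b c d : (`|a| + `|c| <= N)%N -> a * d - b * c = 1 ->
  reach (mx2 a b c d).
Proof.
elim: N a b c d => [|N IH] a b c d Hm Hd.
  have a0 : a = 0 by lia.
  have c0 : c = 0 by lia.
  by move: Hd; rewrite a0 c0 !mul0r mulr0 subr0.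
have [c0|c0] := eqVneq c 0.
  by rewrite c0; apply: reach_ut; move: Hd; rewrite c0 mulr0 subr0.
have [a0|a0] := eqVneq a 0.
  apply: (reach_back s1); apply: (reach_back s2).
  rewrite a0 /= !mx2_mul.
  have -> : -1 * (1 * 0 + 1 * c) + 1 * (0 * 0 + 1 * c) = 0 :> int by ring.
  apply: reach_ut; rewrite -[RHS]Hd a0; ring.
have [le|lt] := leqP `|c|%N `|a|%N.
  case: (boolP ((0 < a) == (0 < c))) => sg.
    apply: (reach_back s1i); rewrite /= mx2_mul; apply: IH.
      move/eqP: sg => sg; move/eqP: a0 => a0; move/eqP: c0 => c0.
      case: (ltrP 0 a) sg => Ha; case: (ltrP 0 c) => Hc //= _; lia.
    rewrite -[RHS]Hd; ring.
  apply: (reach_back s1); rewrite /= mx2_mul; apply: IH.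
    move/eqP: a0 => a0; move/eqP: c0 => c0.
    case: (ltrP 0 a) sg => Ha; case: (ltrP 0 c) => Hc //= _; lia.
  rewrite -[RHS]Hd; ring.
case: (boolP ((0 < a) == (0 < c))) => sg.
  apply: (reach_back s2); rewrite /= mx2_mul; apply: IH.
    move/eqP: sg => sg; move/eqP: a0 => a0; move/eqP: c0 => c0.
    case: (ltrP 0 a) sg => Ha; case: (ltrP 0 c) => Hc //= _; lia.
  rewrite -[RHS]Hd; ring.
apply: (reach_back s2i); rewrite /= mx2_mul; apply: IH.
  move/eqP: a0 => a0; move/eqP: c0 => c0.
  case: (ltrP 0 a) sg => Ha; case: (ltrP 0 c) => Hc //= _; lia.
rewrite -[RHS]Hd; ring.
Qed.

Lemma phi_surj (M : 'M[int]_2) : \det M = 1 -> exists w, phi w = M.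
Proof.
rewrite [M]mx2_eta mx2_det => H.
exact: (reach_all _ _ _ _ _ (leqnn _) H).
Qed.


Lemma beq_conjw w {g g'} : beq g g' -> beq (w ++ g ++ winv w) (w ++ g' ++ winv w).
Proof. move=> H; apply: beq_catl; exact: beq_catr. Qed.

Lemma bconj_refl g : bconj g g.
Proof. by exists [::]; rewrite /winv /= cats0; exact: beq_refl. Qed.

Lemma beq_bconj {h g} : beq h g -> bconj h g.
Proof. by move=> H; exists [::]; rewrite /winv /= cats0. Qed.

Lemma bconj_trans {h g k} : bconj h g -> bconj g k -> bconj h k.
Proof.
case=> w Hw [v Hv]; exists (w ++ v).
apply: beq_trans Hw _.
apply: beq_trans (beq_conjw w Hv) _.
rewrite winv_cat -!catA; exact: beq_refl.
Qed.

Lemma bconj_sym {h g} : bconj h g -> bconj g h.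
Proof.
case=> w Hw; exists (winv w); rewrite winvK.
apply: beq_sym.
have E0 := beq_conjw (winv w) Hw; rewrite winvK -!catA in E0.
apply: beq_trans E0 _.
have E1 := beq_catr (g ++ winv w ++ w) (winv_l w).
have E2 := beq_catl (winv w ++ w ++ g) (winv_l w).
rewrite -!catA /= in E1 E2; rewrite cats0 in E2.
have E3 := beq_catr g (winv_l w); rewrite -catA in E3.
exact: beq_trans E2 E3.
Qed.

Lemma b3class_eq g h : bconj g h -> b3class g = b3class h.
Proof.
move=> H; apply/seteqP; split=> x /= Hx.
  exact: bconj_trans Hx H.
exact: bconj_trans Hx (bconj_sym H).
Qed.

Lemma b3class_inv g h : b3class g = b3class h -> bconj g h.
Proof. by move=> E; have : b3class h g by rewrite -E; exact: bconj_refl. Qed.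

Lemma central_bconj z {h g} : central z -> bconj h g -> bconj (z ++ h) (z ++ g).
Proof.
move=> Hz [w Hw]; exists w.
apply: beq_trans (beq_catl z Hw) _.
have := beq_catr (g ++ winv w) (beq_sym (Hz w)); rewrite -!catA; exact.
Qed.

Definition Rc (A B : 'M[int]_2) := exists P : 'M[int]_2, \det P = 1 /\ B = P *m A *m invmx P.

Lemma unit_det1 {P : 'M[int]_2} : \det P = 1 -> P \in unitmx.
Proof. by move=> H; rewrite unitmxE H unitr1. Qed.

Lemma Rc_refl A : Rc A A.
Proof. by exists 1%:M; rewrite det1 invmx1 mul1mx mulmx1. Qed.

Lemma Rc_sym {A B} : Rc A B -> Rc B A.
Proof.
case=> P [HP ->]; exists (invmx P); split.
  by rewrite det_inv HP invr1.
have U := unit_det1 HP.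
by rewrite invmxK !mulmxA mulVmx // mul1mx -mulmxA mulVmx // mulmx1.
Qed.

Lemma Rc_trans {A B C} : Rc A B -> Rc B C -> Rc A C.
Proof.
case=> P [HP ->] [Q [HQ ->]]; exists (Q *m P); split.
  by rewrite det_mulmx HP HQ mulr1.
have UP := unit_det1 HP; have UQ := unit_det1 HQ.
have -> : invmx (Q *m P) = invmx P *m invmx Q.
  apply: left_inv; by rewrite mulmxA -(mulmxA (invmx P)) mulVmx // mulmx1 mulVmx.
by rewrite !mulmxA.
Qed.

Lemma sl2class_eq A B : Rc A B -> sl2class A = sl2class B.
Proof.
move=> H; apply/seteqP; split=> x /= Hx.
  exact: Rc_trans (Rc_sym H) Hx.
exact: Rc_trans H Hx.
Qed.

Lemma sl2class_inv A B : sl2class A = sl2class B -> Rc A B.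
Proof.
move=> E; have : sl2class B B by exact: Rc_refl.
by rewrite -E.
Qed.

Lemma phi_bconj {h g} : bconj h g -> Rc (phi g) (phi h).
Proof.
case=> w Hw; exists (phi w); split; first exact: phi_det.
by rewrite (phi_beq Hw) !phi_cat phi_winv mulmxA.
Qed.

Lemma btrace_bconj h g : bconj h g -> btrace h = btrace g.
Proof.
move=> /phi_bconj [P [HP E]]; rewrite /btrace E mxtrace_mulC mulmxA mulVmx ?mul1mx //.
exact: unit_det1.
Qed.

Lemma expsum_bconj h g : bconj h g -> expsum h = expsum g.
Proof.
case=> w Hw; rewrite (expsum_beq Hw) !expsum_cat expsum_winv; lia.
Qed.

Lemma phistar_class g : phistar (b3class g) = sl2class (phi g).
Proof.
apply/seteqP; split=> x /=.
  case=> g' [Hg' Hx]; exact: Rc_trans (phi_bconj Hg') Hx.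
move=> Hx; exists g; split=> //; exact: bconj_refl.
Qed.

Lemma conj_crit g1 g2 : sl2class (phi g1) = sl2class (phi g2) ->
  (exists m, expsum g1 - expsum g2 = 12 * m) /\
  (expsum g1 = expsum g2 -> bconj g2 g1).
Proof.
move=> /sl2class_inv [P [HP E]].
have [p Hp] := phi_surj P HP.
set w := p ++ g1 ++ winv p ++ winv g2.
have Hw : phi w = 1%:M.
  rewrite /w !phi_cat !phi_winv Hp !mulmxA -E mulmxV //.
  apply: unit_det1; exact: phi_det.
have [m [Hm H0]] := kernel w Hw.
have Hew : expsum w = expsum g1 - expsum g2.
  rewrite /w !expsum_cat !expsum_winv; lia.
split; first by exists m; rewrite -Hew.
move=> Heq; have m0 : m = 0 by lia.
have Hb := H0 m0.
exists p; apply: beq_sym.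
have E1 := beq_catr g2 Hb.
have E2 := beq_catl (p ++ g1 ++ winv p) (winv_l g2).
rewrite /w -!catA /= in E1 E2; rewrite cats0 in E2.
exact: beq_trans (beq_sym E2) E1.
Qed.


Definition mulc (z : word) (C : set word) : set word :=
  [set h | exists g, C g /\ bconj h (z ++ g)].

Lemma mulc_class z g : central z -> mulc z (b3class g) = b3class (z ++ g).
Proof.
move=> Hz; apply/seteqP; split=> x /=.
  case=> g' [Hg' Hx]; exact: bconj_trans Hx (central_bconj _ Hz Hg').
move=> Hx; exists g; split=> //; exact: bconj_refl.
Qed.

Lemma Xset_E t n C : Xset t n C <-> exists g, C = b3class g /\ btrace g = t /\ expsum g = n.
Proof. by []. Qed.

Lemma mulc_bij z t n t' n' : central z ->
  (forall g, btrace g = t -> expsum g = n -> btrace (z ++ g) = t' /\ expsum (z ++ g) = n') ->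
  (forall g, btrace g = t' -> expsum g = n' ->
     btrace (winv z ++ g) = t /\ expsum (winv z ++ g) = n) ->
  set_bij (Xset t n) (Xset t' n') (mulc z).
Proof.
move=> Hz H1 H2; have Hzi := central_inv z Hz; split.
- move=> C [g [-> [Ht Hn]]]; exists (z ++ g); split; first exact: mulc_class.
  exact: H1.
- move=> C1 C2; rewrite !in_setE => -[g1 [-> [Ht1 Hn1]]] [g2 [-> [Ht2 Hn2]]].
  rewrite !mulc_class // => /b3class_inv E.
  apply: b3class_eq.
  have E' := central_bconj _ Hzi E.
  have F1 := beq_catr g1 (winv_l z); have F2 := beq_catr g2 (winv_l z).
  rewrite -catA /= in F1 F2.
  rewrite -catA in F2.
  exact: bconj_trans (bconj_sym (beq_bconj F1)) (bconj_trans E' (beq_bconj F2)).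
- move=> C' [g' [-> [Ht Hn]]].
  exists (b3class (winv z ++ g')).
    exists (winv z ++ g'); split=> //; exact: H2.
  rewrite mulc_class //; apply: b3class_eq; apply: beq_bconj.
  have := beq_catr g' (winv_r z); by rewrite -catA.
Qed.

Lemma mx_opp_det (A : 'M[int]_2) : \det (- A) = \det A.
Proof. by rewrite [A]mx2_eta mx2_opp !mx2_det; ring. Qed.

Lemma mx_opp_tr (A : 'M[int]_2) : \tr (- A) = - \tr A.
Proof. by rewrite [A]mx2_eta mx2_opp !mx2_tr; ring. Qed.

Lemma phi_D2_mul g : phi (D2 ++ g) = - phi g.
Proof.
rewrite phi_cat phi_D2 [phi g]mx2_eta mx2_mul mx2_opp; congr mx2; ring.
Qed.

Lemma phi_D2i_mul g : phi (winv D2 ++ g) = - phi g.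
Proof.
rewrite phi_cat phi_D2i [phi g]mx2_eta mx2_mul mx2_opp; congr mx2; ring.
Qed.

Definition D4 := D2 ++ D2.

Lemma phi_D4_mul g : phi (D4 ++ g) = phi g.
Proof. by rewrite /D4 -catA !phi_D2_mul opprK. Qed.

Lemma phi_D4i_mul g : phi (winv D4 ++ g) = phi g.
Proof. by rewrite /D4 winv_cat -catA !phi_D2i_mul opprK. Qed.

Definition beta (D : set 'M[int]_2) : set 'M[int]_2 := [set B | D (- B)].

Lemma Rc_opp {A B} : Rc A B -> Rc (- A) (- B).
Proof. by case=> P [HP ->]; exists P; rewrite mulmxN mulNmx. Qed.

Lemma beta_class A : beta (sl2class A) = sl2class (- A).
Proof.
apply/seteqP; split=> x /= Hx.
  by have := Rc_opp Hx; rewrite opprK.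
by have := Rc_opp Hx; rewrite opprK.
Qed.

Lemma pow12 (k : int) : exists w, phi w = 1%:M /\ expsum w = 12 * k.
Proof.
exists (powD (2 * k)); split.
  rewrite phi_powD abszM oddM /= /sgnm mx2_scalar //.
rewrite expsum_powD; lia.
Qed.

Theorem lemma2p1 (t n : int) :
  (* (i) *)
  set_inj (Xset t n) phistar /\
  (* (ii) *)
  (exists (alpha : set word -> set word) (beta : set 'M[int]_2 -> set 'M[int]_2),
     set_bij (Xset t n) (Xset (- t) (n + 6)) alpha /\
     set_bij (Yset t) (Yset (- t)) beta /\
     (forall C, Xset t n C -> phistar (alpha C) = beta (phistar C))) /\
  (* (iii) *)
  (exists gamma : set word -> set word,
     set_bij (Xset t n) (Xset t (n + 12)) gamma /\
     (forall C, Xset t n C -> phistar (gamma C) = phistar C)) /\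
  (* (iv) *)
  set_bij (Xcoprod12 t n) (Yset t) (fun p => phistar p.2).
Proof.
split; [|split; [|split]].
- move=> C1 C2; rewrite !in_setE => -[g1 [-> [Ht1 Hn1]]] [g2 [-> [Ht2 Hn2]]].
  rewrite !phistar_class => /conj_crit [_ H].
  apply: b3class_eq; apply: bconj_sym; apply: H; lia.
- exists (mulc D2), beta; split; [|split].
  + apply: mulc_bij; first exact: D2_central.
      move=> g Ht Hn; rewrite /btrace phi_D2_mul mx_opp_tr expsum_cat expsum_D2.
      split; [by rewrite -Ht|lia].
    move=> g Ht Hn; rewrite /btrace phi_D2i_mul mx_opp_tr expsum_cat -/D2i expsum_D2i.
    split; [by rewrite -/(btrace g) Ht opprK|lia].
  + split.
    * move=> D [A [HA [Ht ->]]]; exists (- A); split.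
        by rewrite mx_opp_det.
      by rewrite mx_opp_tr Ht beta_class.
    * move=> D1 D2'; rewrite !in_setE => _ _ E.
      apply/seteqP; split=> x Hx.
        have : beta D1 (- x) by rewrite /beta /= opprK.
        by rewrite E /beta /= opprK.
      have : beta D2' (- x) by rewrite /beta /= opprK.
      by rewrite -E /beta /= opprK.
    * move=> D [A [HA [Ht ->]]]; exists (sl2class (- A)).
        exists (- A); split; first by rewrite mx_opp_det.
        by rewrite mx_opp_tr Ht opprK.
      by rewrite beta_class opprK.
  + move=> C [g [-> [Ht Hn]]].
    by rewrite mulc_class ?phistar_class ?beta_class ?phi_D2_mul //; exact: D2_central.
- exists (mulc D4); split.
  + apply: mulc_bij; first exact: central_cat D2_central D2_central.
      move=> g Ht Hn; rewrite /btrace phi_D4_mul expsum_cat /D4 expsum_cat expsum_D2.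
      split; [by []|lia].
    move=> g Ht Hn; rewrite /btrace phi_D4i_mul expsum_cat expsum_winv /D4 expsum_cat expsum_D2.
    split; [by []|lia].
  + move=> C [g [-> [Ht Hn]]].
    rewrite mulc_class ?phistar_class ?phi_D4_mul //.
    exact: central_cat D2_central D2_central.
- split.
  + move=> [j C] [g [-> [Ht Hn]]] /=.
    exists (phi g); split; first exact: phi_det.
    by rewrite phistar_class.
  + move=> [j1 C1] [j2 C2]; rewrite !in_setE /Xcoprod12 /=.
    move=> [g1 [-> [Ht1 Hn1]]] [g2 [-> [Ht2 Hn2]]].
    rewrite !phistar_class => /conj_crit [[m Hm] H].
    have Hj1 := ltn_ord j1; have Hj2 := ltn_ord j2.
    have ej : j1 = j2 by apply: val_inj => /=; lia.
    subst j2; congr pair.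
    apply: b3class_eq; apply: bconj_sym; apply: H; lia.
  + move=> D [A [HA [Ht ->]]].
    have [g Hg] := phi_surj A HA.
    set q := ((expsum g - n) %/ 12)%Z.
    set r := ((expsum g - n) %% 12)%Z.
    have Hdiv := divz_eq (expsum g - n) 12.
    have Hr0 : 0 <= r by apply: modz_ge0.
    have Hr1 : r < 12 by apply: ltz_pmod.
    have Hj : (`|r|%N < 12)%N by lia.
    have [w [Hw1 Hw2]] := pow12 (- q).
    exists (Ordinal Hj, b3class (w ++ g)).
      exists (w ++ g); split=> //; split.
        by rewrite /btrace phi_cat Hw1 mul1mx Hg.
      rewrite expsum_cat Hw2 /=; rewrite -/q -/r in Hdiv; lia.
    by rewrite /= phistar_class phi_cat Hw1 mul1mx Hg.
Qed.
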